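(* The relation $\mathrm{Step}^{(d)}\cup\mathrm{Step}^{(p)}$ is well-founded: there is no infinite sequence of configurations $\gamma_0,\gamma_1,\dots$ such that each $\gamma_i\to\gamma_{i+1}$ is a d-step or a par-step.
   Context: Let $G$ be a finite, connected, undirected graph with node set $V$ and a distinguished node $r$ (the root). Each node $p$ has a fixed ordered list $N(p)$ of its neighbours. A configuration $\gamma$ assigns to each node $p$ a value $\gamma.p.d\in\mathbb N$ (unbounded) and a neighbour $\gamma.p.par\in N(p)$. For a non-root node $p$ let $Dist_p(\gamma)=\min\{\gamma.q.d+1 : q\in N(p)\}$. Algorithm BFS (Dolev et al.) has the following actions. Root: enabled iff $\gamma.r.d\neq 0$; executing it sets $r.d:=0$. Non-root $p$, action CD: enabled iff $\gamma.p.d\ne Dist_p(\gamma)$; executing sets $p.d:=Dist_p(\gamma)$. Non-root $p$, action CP: enabled iff $\gamma.p.d=Dist_p(\gamma)$ and $\gamma.q_0.d+1\neq\gamma.p.d$ where $q_0=\gamma.p.par$; executing sets $p.par$ to the first $q$ in $N(p)$ with $\gamma.q.d+1=\gamma.p.d$. A node is enabled if one of its actions is enabled. A step $\gamma\to\gamma'$ (unfair daemon) holds iff there is a nonempty set $S$ of nodes enabled in $\gamma$ such that $\gamma'$ is obtained by every $p\in S$ simultaneously executing its enabled action (evaluated in $\gamma$), all other nodes unchanged. $\mathrm{Step}^{(d)}$ (d-steps): steps with $\gamma.r.d=\gamma'.r.d$ and $\gamma.p.d\ne\gamma'.p.d$ for some node $p$. $\mathrm{Step}^{(p)}$ (par-steps):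 steps with $\gamma.p.d=\gamma'.p.d$ for all $p$. A relation is well-founded if it admits no infinite forward chain. *)

(* Defs.v *)
From mathcomp Require Import all_boot.
Set Implicit Arguments. Unset Strict Implicit. Unset Printing Implicit Defensive.

Record config (V : Type) := Config { cd : V -> nat; cpar : V -> V }.

Section BFS.
Variables (V : finType) (N : V -> seq V) (r : V).

Definition graph_ok : Prop :=
  [/\ forall p, uniq (N p),
      forall p, p \notin N p,
      forall p q, (q \in N p) = (p \in N q)
    & forall p q, connect (fun x y => y \in N x) p q].

Definition valid (g : config V) : Prop := forall p, cpar g p \in N p.

(* Dist_p(g) = min { g.q.d + 1 : q in N(p) } (N p is nonempty for p <> r
   in a connected graph with at least two nodes). *)
Definition Dist (g : config V) (p : V) : nat :=
  let vals := [seq cd g q + 1 | q <- N p] in foldr minn (head 0 vals) vals.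

Definition firstpar (g : config V) (p : V) : V :=
  nth p (N p) (find (fun q => cd g q + 1 == cd g p) (N p)).

Definition root_enabled (g : config V) : bool := cd g r != 0.
Definition CD_enabled (g : config V) (p : V) : bool := cd g p != Dist g p.
Definition CP_enabled (g : config V) (p : V) : bool :=
  (cd g p == Dist g p) && (cd g (cpar g p) + 1 != cd g p).

Definition enabled (g : config V) (p : V) : bool :=
  if p == r then root_enabled g else CD_enabled g p || CP_enabled g p.

Definition new_d (g : config V) (p : V) : nat :=
  if p == r then 0
  else if CD_enabled g p then Dist g p else cd g p.
Definition new_par (g : config V) (p : V) : V :=
  if p == r then cpar g p
  else if CD_enabled g p then cpar g p
  else if CP_enabled g p then firstpar g p else cpar g p.

Definition step (g g' : config V) : Prop :=
  exists S : {set V},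
    [/\ S != set0,
        forall p, p \in S -> enabled g p
      & forall p,
          (cd g' p = if p \in S then new_d g p else cd g p) /\
          (cpar g' p = if p \in S then new_par g p else cpar g p)].

Definition dstep (g g' : config V) : Prop :=
  step g g' /\ cd g r = cd g' r /\ exists p, cd g p <> cd g' p.

Definition parstep (g g' : config V) : Prop :=
  step g g' /\ forall p, cd g p = cd g' p.

End BFS.

(* Main.v *)
Require Import Defs.
From mathcomp Require Import all_boot.
From mathcomp Require Import zify.
From Stdlib Require Import Classical.
Set Implicit Arguments. Unset Strict Implicit. Unset Printing Implicit Defensive.

Lemma foldr_minn_le (s : seq nat) x y : y \in s -> foldr minn x s <= y.
Proof.
elim: s => //= a s IH; rewrite in_cons => /orP [/eqP<-|/IH H].
  exact: geq_minl.
exact: leq_trans (geq_minr _ _) H.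
Qed.

Lemma foldr_minn_in (s : seq nat) x : foldr minn x s \in x :: s.
Proof.
elim: s => /= [|a s IH]; first by rewrite inE.
rewrite /minn; case: ifP => _; first by rewrite !inE eqxx orbT.
move: IH; rewrite !inE => /orP [->//|->]; by rewrite !orbT.
Qed.

Lemma Dist_le (V : finType) (N : V -> seq V) g p q :
  q \in N p -> Dist N g p <= cd g q + 1.
Proof.
move=> Hq; rewrite /Dist; apply: foldr_minn_le; exact: (map_f (fun q => cd g q + 1) Hq).
Qed.

Lemma Dist_in (V : finType) (N : V -> seq V) g p :
  N p != [::] -> exists2 q, q \in N p & cd g q + 1 = Dist N g p.
Proof.
rewrite /Dist; case E: (N p) => [//|a s] _ /=.
have := foldr_minn_in [seq cd g q + 1 | q <- a :: s] (cd g a + 1).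
rewrite /= in_cons => /orP [/eqP ->|]; first by exists a; rewrite ?inE ?eqxx.
rewrite in_cons => /orP [/eqP ->|]; first by exists a; rewrite ?inE ?eqxx.
case/mapP => q Hq ->; exists q => //; by rewrite inE Hq orbT.
Qed.

Lemma stab (f : nat -> bool) t0 :
  (forall t, t0 <= t -> f t -> f t.+1) ->
  exists tp, t0 <= tp /\ forall t, tp <= t -> f t = f tp.
Proof.
move=> Hinc.
case: (classic (exists t, t0 <= t /\ f t)) => [[t [Ht Hf]]|Hno].
  exists t; split => // t'; elim: t' => [|t' IH]; first by rewrite leqn0 => /eqP ->.
  rewrite leq_eqVlt => /orP [/eqP ->//|Hlt].
  have Ht' : t0 <= t' by apply: leq_trans Ht _.
  by rewrite (Hinc t' Ht' _) ?Hf // IH.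
exists t0; split => // t Ht.
case E: (f t); last by case E0: (f t0) => //; exfalso; apply: Hno; exists t0.
by exfalso; apply: Hno; exists t.
Qed.

Section Main.
Variables (V : finType) (N : V -> seq V) (r : V).
Hypothesis Hg : graph_ok N.
Variable gam : nat -> config V.
Hypothesis Hs : forall i, dstep N r (gam i) (gam i.+1) \/ parstep N r (gam i) (gam i.+1).

Local Notation d t p := (cd (gam t) p).

Lemma N_nonempty p : p != r -> N p != [::].
Proof.
move=> Hpr; case: Hg => _ _ _ Hc.
case/connectP: (Hc p r) => [[|q s]] /=.
  by move=> _ E; rewrite E eqxx in Hpr.
by case/andP; case: (N p).
Qed.

Lemma step_of i : step N r (gam i) (gam i.+1).
Proof. by case: (Hs i) => [[]|[]]. Qed.

Lemma root_const i : d i.+1 r = d i r.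
Proof. by case: (Hs i) => [[_ [E _]]|[_ E]]; rewrite E. Qed.

Lemma step_d i p : d i.+1 p = d i p \/ (p != r /\ d i.+1 p = Dist N (gam i) p).
Proof.
case: (eqVneq p r) => [->|Hpr]; first by left; exact: root_const.
case: (step_of i) => S [_ _ H]; case: (H p) => -> _.
case: (p \in S); last by left.
rewrite /new_d (negbTE Hpr) /=; case: ifP => _; [by right | by left].
Qed.

Definition P k t0 := forall t, t0 <= t -> forall p,
  (d t p < k) || (d t0 p < k) -> d t p = d t0 p.

Lemma noentry k t0 : P k t0 -> forall t, t0 <= t -> forall p, k <= d t p -> k <= d t.+1 p.
Proof.
move=> HP t Ht p Hk; rewrite leqNgt; apply/negP => Hlt.
have E := HP t.+1 (leqW Ht) p (introT orP (or_introl Hlt)).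
have E2 := HP t Ht p; rewrite -E Hlt orbT in E2.
have := E2 isT; lia.
Qed.

Lemma level_step k t0 : P k t0 -> exists t1, P k.+1 t1.
Proof.
move=> HP.
have mono : forall p, exists tp, t0 <= tp /\
    forall t, tp <= t -> (d t p == k) = (d tp p == k).
  move=> p; case HW: (has (fun q => d t0 q + 1 == k) (N p)).
    apply: stab => t Ht /eqP Hk.
    case/hasP: HW => q Hq /eqP Hqk.
    have Hn := noentry HP Ht (eq_leq (esym Hk)).
    have Hdq : d t q = d t0 q by apply: HP => //; apply/orP; right; lia.
    have HD := Dist_le (gam t) Hq.
    case: (step_d t p) => [E|[_ E]]; rewrite E in Hn *; apply/eqP; lia.
  have : exists tp, t0 <= tp /\ forall t, tp <= t -> (d t p != k) = (d tp p != k).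
    apply: (stab (f := fun t => d t p != k)).
    move=> t Ht Hne; case: (step_d t p) => [->//|[Hpr E]].
  rewrite E; apply/eqP => Ek.
  have [q Hq Eq] := Dist_in (gam t) (N_nonempty Hpr).
  change (d t q + 1 = Dist N (gam t) p) in Eq.
  have Hlt : d t q < k by lia.
  have Hdq : d t q = d t0 q by apply: HP => //; rewrite Hlt.
  move/negP: HW; apply; apply/hasP; exists q => //; apply/eqP; lia.
  move=> [tp [H1 H2]]; exists tp; split => // t Ht; have := H2 t Ht; by move/negb_inj.
have [tf Htf] := fin_all_exists mono.
exists (maxn t0 (\max_p tf p)) => t Ht p Hor.
set t1 := maxn t0 _ in Ht Hor *.
have Ht0 : t0 <= t1 by apply: leq_maxl.
have Htp : tf p <= t1 by rewrite leq_max; apply/orP; right; exact: leq_bigmax.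
case: (Htf p) => _ Hm.
have Ekt : (d t p == k) = (d t1 p == k).
  by rewrite (Hm t (leq_trans Htp Ht)) (Hm t1 Htp).
have A := HP t (leq_trans Ht0 Ht) p.
have B := HP t1 Ht0 p.
case: (ltnP (d t p) k) => h1.
  have E1 := A (introT orP (or_introl h1)).
  have E2 := B (introT orP (or_intror (etrans (congr1 (fun x => x < k) (esym E1)) h1))).
  by rewrite E1 E2.
case: (ltnP (d t1 p) k) => h2.
  have E2 := B (introT orP (or_introl h2)).
  have E1 := A (introT orP (or_intror (etrans (congr1 (fun x => x < k) (esym E2)) h2))).
  by rewrite E1 E2.
case/orP: Hor => H.
  have /eqP E1 : d t p == k by apply/eqP; lia.
  move: Ekt; rewrite E1 eqxx => /esym /eqP; lia.
have /eqP E1 : d t1 p == k by apply/eqP; lia.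
move: Ekt; rewrite E1 eqxx => /eqP; lia.
Qed.


Lemma all_levels k : exists t0, P k t0.
Proof.
elim: k => [|k [t0 H]]; last exact: level_step H.
by exists 0 => t _ p; rewrite !ltn0.
Qed.

Lemma bound_path t : forall s p, path (fun x y => y \in N x) p s -> last p s = r ->
  d t p <= \max_q d 0 q + size s.
Proof.
elim: t => [|t IH] s p.
  move=> _ _; apply: leq_trans (leq_addr _ _); exact: leq_bigmax.
case: s => [|q s] /=.
  move=> _ ->; rewrite root_const; exact: (IH [::] r).
case/andP => Hq Hp Hl.
case: (step_d t p) => [->|[_ ->]].
  by apply: (IH (q :: s) p) => //=; rewrite Hq Hp.
have := IH s q Hp Hl; have := Dist_le (gam t) Hq; lia.
Qed.

Lemma bound p : exists K, forall t, d t p <= K.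
Proof.
case: Hg => _ _ _ Hc.
case/connectP: (Hc p r) => s Hp Hl.
exists (\max_q d 0 q + size s) => t; apply: bound_path => //; by rewrite -Hl.
Qed.

Lemma d_stable : exists t1, forall t, t1 <= t -> forall p, d t p = d t1 p.
Proof.
have [Kf HK] := fin_all_exists bound.
have [t1 H] := all_levels (\max_p Kf p).+1.
exists t1 => t Ht p; apply: H => //.
by rewrite ltnS (leq_trans (HK p t)) //; exact: leq_bigmax.
Qed.

Definition Bad (g : config V) := [set p | cd g (cpar g p) + 1 != cd g p].

Lemma bad_dec t : (forall p, d t.+1 p = d t p) -> #|Bad (gam t.+1)| < #|Bad (gam t)|.
Proof.
move=> Ed.
case: (step_of t) => S [HS0 Hen H].
have inS : forall p, p \in S ->
   p \in Bad (gam t) /\ p \notin Bad (gam t.+1).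
  move=> p pS; have := Hen p pS; rewrite /enabled.
  case: (H p) => Hd Hpar; rewrite pS in Hd Hpar.
  rewrite /new_d in Hd; rewrite /new_par in Hpar.
  case: eqP Hd Hpar => [-> Hd _ Hr|Hpr Hd Hpar].
    by move: Hr; rewrite /root_enabled -{1}(Ed r) Hd.
  rewrite /CD_enabled /CP_enabled; case: ifP Hd Hpar => [HCD Hd _ _|HCD Hd Hpar] /=.
    by move: HCD; rewrite /CD_enabled -Hd Ed eqxx.
  move: HCD; rewrite /CD_enabled => HCD; rewrite HCD /=.
  case/andP => /eqP HD Hb.
  rewrite /CP_enabled Hb andbT HD eqxx /= in Hpar.
  rewrite !inE Hb; split => //.
  have Hpr' : p != r by apply/eqP.
  have [q Hq Eq] := Dist_in (gam t) (N_nonempty Hpr').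
  have Hhas : has (fun q => cd (gam t) q + 1 == cd (gam t) p) (N p).
    by apply/hasP; exists q => //; rewrite HD Eq.
  have := nth_find p Hhas; rewrite -/(firstpar _ _ _) -Hpar.
  by rewrite !Ed => ->.
apply: proper_card; apply/properP; split.
  apply/subsetP => p; case pS: (p \in S); first by case: (inS p pS).
  case: (H p) => _; rewrite pS !inE => ->; by rewrite !Ed.
case/set0Pn: HS0 => p pS; case: (inS p pS) => ??; by exists p.
Qed.

End Main.

Theorem lemma2 (V : finType) (N : V -> seq V) (r : V) :
  graph_ok N ->
  ~ (exists gam : nat -> config V,
        (forall i, valid N (gam i)) /\
        (forall i, dstep N r (gam i) (gam i.+1) \/ parstep N r (gam i) (gam i.+1))).
Proof.
move=> Hg [gam [_ Hs]].
have [t1 Ht1] := d_stable Hg Hs.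
have H : forall n, #|Bad (gam (t1 + n))| + n <= #|Bad (gam t1)|.
  elim => [|n IH]; first by rewrite !addn0.
  have Hlt : #|Bad (gam (t1 + n).+1)| < #|Bad (gam (t1 + n))|.
    apply: (bad_dec Hg Hs) => p.
    rewrite (Ht1 (t1 + n).+1) ?(Ht1 (t1 + n)) //; lia.
  rewrite !addnS -addSn; apply: leq_trans IH; by rewrite leq_add2r.
have := H (#|Bad (gam t1)|).+1; lia.
Qed.
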